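(* Let $\mathcal{A}$ be an association scheme with splitting field $L$, and let $E\subseteq\mathbb{C}$ be a field containing $L$ and closed under complex conjugation. For any Bose–Mesner algebra automorphism $\psi$ of $E[\mathcal{A}]$, the fixed-point space $\{M\in E[\mathcal{A}]: M^\psi=M\}$ equals $E[\mathcal{B}]$ for some subscheme $\mathcal{B}$ of $\mathcal{A}$.
   Context: An association scheme on $v$ vertices is a set $\mathcal{A}=\{A_0,\ldots,A_d\}$ of $v\times v$ $(0,1)$-matrices with $A_0=I$, $\sum_iA_i=J$, closed under transpose, pairwise commuting, and with all products $A_iA_j$ in the span of $\mathcal{A}$. Its principal idempotents are the pairwise orthogonal Hermitian idempotents $E_0,\dots,E_d$ summing to $I$ that form a basis of the span, with $A_iE_j=p_i(j)E_j$; the splitting field $L$ is $\mathbb{Q}(p_i(j):i,j)$. $E[\mathcal{A}]$ is the $E$-span of $\mathcal{A}$; $\circ$ is the Schur product. A Bose–Mesner algebra automorphism of $E[\mathcal{A}]$ is an invertible $E$-linear map $\psi$ with $(MN)^\psi=M^\psi N^\psi$, $(M\circ N)^\psi=M^\psi\circ N^\psi$ and $(M^* )^\psi=(M^\psi)^*$. A subscheme (fusion scheme) of $\mathcal{A}$ is an association scheme $\mathcal{B}=\{B_0,\ldots,B_e\}$ with $B_0=I$ and each $B_i=\sum_{j\in C_i}A_j$ for a partition $\{C_0=\{0\},C_1,\ldots,C_e\}$ of $\{0,\ldots,d\}$. *)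

(* Defs.v *)
From mathcomp Require Import all_boot all_order all_algebra.
From mathcomp Require Import complex Rstruct.
Set Implicit Arguments.
Unset Strict Implicit.
Unset Printing Implicit Defensive.
Import GRing.Theory Num.Theory.
Local Open Scope ring_scope.

Definition CC : numClosedFieldType := (Rdefinitions.R)[i].

Definition schur v (M N : 'M[CC]_v) : 'M[CC]_v := \matrix_(r, s) (M r s * N r s).

Definition ctrmx v (M : 'M[CC]_v) : 'M[CC]_v := (map_mx Num.conj M)^T.

Definition conj_closed_subfield (E : {pred CC}) : Prop :=
  GRing.divring_closed E /\ (forall z, z \in E -> z^* \in E).

Definition span_in (K : {pred CC}) v n (A : 'I_n -> 'M[CC]_v) (M : 'M[CC]_v) : Prop :=
  exists c : 'I_n -> CC, (forall i, c i \in K) /\ M = \sum_(i < n) c i *: A i.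

Definition cspan v n (A : 'I_n -> 'M[CC]_v) (M : 'M[CC]_v) : Prop :=
  span_in predT A M.

Definition is_assoc_scheme v d (A : 'I_d.+1 -> 'M[CC]_v) : Prop :=
  (forall i r s, A i r s = 0 \/ A i r s = 1) /\
  (forall i, A i != 0) /\
  A ord0 = 1%:M /\
  (\sum_(i < d.+1) A i = const_mx 1) /\
  (forall i, exists j, (A i)^T = A j) /\
  (forall i j, A i *m A j = A j *m A i) /\
  (forall i j, cspan A (A i *m A j)).

Definition principal_idempotents v d (A : 'I_d.+1 -> 'M[CC]_v)
    (Eid : 'I_d.+1 -> 'M[CC]_v) (p : 'I_d.+1 -> 'I_d.+1 -> CC) : Prop :=
  (forall j, Eid j *m Eid j = Eid j) /\
  (forall j k, j != k -> Eid j *m Eid k = 0) /\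
  (forall j, ctrmx (Eid j) = Eid j) /\
  (\sum_(j < d.+1) Eid j = 1%:M) /\
  (* {Eid_j} is a basis of the (complex) span of A *)
  (forall j, cspan A (Eid j)) /\
  (forall i, cspan Eid (A i)) /\
  (forall c : 'I_d.+1 -> CC, \sum_(j < d.+1) c j *: Eid j = 0 ->
     forall j, c j = 0) /\
  (forall i j, A i *m Eid j = p i j *: Eid j).

(* The splitting field L = Q(p_i(j)) of A is contained in the subfield E
   (E contains Q, so this says every eigenvalue p_i(j) lies in E). *)
Definition splitting_field_in v d (A : 'I_d.+1 -> 'M[CC]_v) (E : {pred CC}) : Prop :=
  exists Eid p, principal_idempotents A Eid p /\ (forall i j, p i j \in E).

Definition BM_automorphism (E : {pred CC}) v d (A : 'I_d.+1 -> 'M[CC]_v)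
    (psi : 'M[CC]_v -> 'M[CC]_v) : Prop :=
  (forall M, span_in E A M -> span_in E A (psi M)) /\
  (forall a M N, a \in E -> span_in E A M -> span_in E A N ->
     psi (a *: M + N) = a *: psi M + psi N) /\
  (forall M N, span_in E A M -> span_in E A N -> psi M = psi N -> M = N) /\
  (forall N, span_in E A N -> exists2 M, span_in E A M & psi M = N) /\
  (forall M N, span_in E A M -> span_in E A N -> psi (M *m N) = psi M *m psi N) /\
  (forall M N, span_in E A M -> span_in E A N -> psi (schur M N) = schur (psi M) (psi N)) /\
  (forall M, span_in E A M -> psi (ctrmx M) = ctrmx (psi M)).

Definition fusion v d e (A : 'I_d.+1 -> 'M[CC]_v) (Cl : 'I_e.+1 -> {set 'I_d.+1}) :
    'I_e.+1 -> 'M[CC]_v :=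
  fun k => \sum_(j in Cl k) A j.

Definition is_subscheme v d e (A : 'I_d.+1 -> 'M[CC]_v) (Cl : 'I_e.+1 -> {set 'I_d.+1}) : Prop :=
  [/\ Cl ord0 = [set ord0],
      (forall k, Cl k != set0),
      (forall j, exists k, j \in Cl k),
      (forall k l, k != l -> [disjoint Cl k & Cl l])
    & is_assoc_scheme (fusion A Cl)].

(* Main.v *)
Require Import Defs.
From mathcomp Require Import all_boot all_order all_algebra.
From mathcomp Require Import complex Rstruct.
Import GRing.Theory Num.Theory.
Local Open Scope ring_scope.
Set Implicit Arguments.
Unset Strict Implicit.

Section Efacts.
Variable E : {pred CC}.
Hypothesis HE : GRing.divring_closed E.

Lemma E1 : 1 \in E. Proof. by case: HE. Qed.
Lemma E0 : 0 \in E. Proof. by case: HE => h1 hB _; rewrite -(subrr 1) hB. Qed.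
Lemma EB x y : x \in E -> y \in E -> x - y \in E.
Proof. by case: HE => _ hB _; apply: hB. Qed.
Lemma ED x y : x \in E -> y \in E -> x + y \in E.
Proof. by move=> hx hy; rewrite -(opprK y) -(sub0r y) EB // EB // E0. Qed.
Lemma EM x y : x \in E -> y \in E -> x * y \in E.
Proof.
move=> hx hy; have [->|y0] := eqVneq y 0; first by rewrite mulr0 E0.
case: HE => _ _ hD.
have hy' : 1 / y \in E by apply: hD => //; apply: E1.
by have := hD _ _ hx hy'; rewrite div1r invrK.
Qed.
Lemma Enat (b : bool) : (b%:R : CC) \in E.
Proof. by case: b; rewrite ?E1 ?E0. Qed.
End Efacts.
Section Basic.
Variables (v d : nat) (A : 'I_d.+1 -> 'M[CC]_v) (E : {pred CC}).
Hypothesis HE : GRing.divring_closed E.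
Variable t : 'I_v -> 'I_v -> 'I_d.+1.
Hypothesis Ht : forall i r s, A i r s = (i == t r s)%:R.
Variable rs : 'I_d.+1 -> 'I_v * 'I_v.
Hypothesis Hrs : forall k, t (rs k).1 (rs k).2 = k.

Definition coef (M : 'M[CC]_v) k := M (rs k).1 (rs k).2.

Lemma sumAE (c : 'I_d.+1 -> CC) r s : (\sum_j c j *: A j) r s = c (t r s).
Proof.
rewrite summxE (bigD1 (t r s)) //= big1 ?addr0 => [|j /negPf hj].
  by rewrite mxE Ht eqxx mulr1.
by rewrite mxE Ht hj mulr0.
Qed.

Lemma coefE c k : coef (\sum_j c j *: A j) k = c k.
Proof. by rewrite /coef sumAE Hrs. Qed.

Lemma Aval i k : coef (A i) k = (i == k)%:R.
Proof. by rewrite /coef Ht Hrs. Qed.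

Lemma Ainj : injective A.
Proof.
move=> i j hij; have := Aval i i; rewrite hij Aval eqxx.
by case: eqVneq => // _ /eqP; rewrite eq_sym oner_eq0.
Qed.

Lemma span_coef M : span_in E A M ->
  M = \sum_j coef M j *: A j /\ forall j, coef M j \in E.
Proof.
case=> c [cE ->]; split; last by move=> j; rewrite coefE.
by apply: eq_bigr => j _; rewrite coefE.
Qed.

Lemma span0 : span_in E A 0.
Proof.
exists (fun _ => 0); split=> [i|]; first exact: (E0 HE).
by rewrite big1 // => i _; rewrite scale0r.
Qed.

Lemma spanA i : span_in E A (A i).
Proof.
exists (fun j => (j == i)%:R); split=> [j|]; first exact: (Enat HE).
apply/matrixP=> r s; rewrite sumAE Ht eq_sym.
done.
Qed.

Lemma spanZD a M N : a \in E -> span_in E A M -> span_in E A N ->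
  span_in E A (a *: M + N).
Proof.
move=> aE [c [cE ->]] [c' [c'E ->]].
exists (fun j => a * c j + c' j); split=> [j|].
  by apply: (ED HE) => //; apply: (EM HE).
rewrite scaler_sumr -big_split /=; apply: eq_bigr => j _.
by rewrite scalerA scalerDl.
Qed.

Lemma spanD M N : span_in E A M -> span_in E A N -> span_in E A (M + N).
Proof. by move=> hM hN; rewrite -[M]scale1r; apply: spanZD => //; apply: (E1 HE). Qed.

Lemma spanZ a M : a \in E -> span_in E A M -> span_in E A (a *: M).
Proof. by move=> aE hM; rewrite -[_ *: _]addr0; apply: spanZD => //; apply: span0. Qed.

Lemma span_sum (I : finType) (P : pred I) (F : I -> 'M[CC]_v) :
  (forall i, P i -> span_in E A (F i)) -> span_in E A (\sum_(i | P i) F i).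
Proof.
move=> hF; apply: (big_ind (span_in E A)) => //; first exact: span0.
exact: spanD.
Qed.

Lemma entryE (M : 'M[CC]_v) : (forall r s, M r s \in E) -> span_in E A M ->
  forall k, coef M k \in E.
Proof. by move=> h _ k; apply: h. Qed.

Lemma spanAA i j : cspan A (A i *m A j) -> span_in E A (A i *m A j).
Proof.
case=> c [_ hc]; exists c; split=> // k.
have := coefE c k; rewrite -hc => <-.
rewrite /coef mxE; apply: (big_ind (fun x => x \in E)) => //.
- exact: (E0 HE).
- exact: (ED HE).
by move=> l _; rewrite !Ht; apply: (EM HE); apply: (Enat HE).
Qed.

Lemma span_mul M N : (forall i j, cspan A (A i *m A j)) ->
  span_in E A M -> span_in E A N -> span_in E A (M *m N).
Proof.
move=> hc [a [aE ->]] [b [bE ->]].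
rewrite mulmx_suml; apply: span_sum => i _.
rewrite mulmx_sumr; apply: span_sum => j _.
rewrite -scalemxAl -scalemxAr; apply: spanZ => //; apply: spanZ => //.
exact: spanAA.
Qed.

End Basic.
Lemma sum_ind v d (A : 'I_d.+1 -> 'M[CC]_v) t (Ht : forall i r s, A i r s = (i == t r s)%:R) i :
  \sum_j (j == i)%:R *: A j = A i.
Proof. by apply/matrixP=> r s; rewrite (sumAE Ht) Ht eq_sym. Qed.

Section Psi.
Variables (v d : nat) (A : 'I_d.+1 -> 'M[CC]_v) (E : {pred CC}).
Hypothesis HE : GRing.divring_closed E.
Variable t : 'I_v -> 'I_v -> 'I_d.+1.
Hypothesis Ht : forall i r s, A i r s = (i == t r s)%:R.
Variable rs : 'I_d.+1 -> 'I_v * 'I_v.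
Hypothesis Hrs : forall k, t (rs k).1 (rs k).2 = k.
Variable psi : 'M[CC]_v -> 'M[CC]_v.
Hypothesis hpsiS : forall M, span_in E A M -> span_in E A (psi M).
Hypothesis hlin : forall a M N, a \in E -> span_in E A M -> span_in E A N ->
     psi (a *: M + N) = a *: psi M + psi N.
Hypothesis hinj : forall M N, span_in E A M -> span_in E A N -> psi M = psi N -> M = N.
Hypothesis hschur : forall M N, span_in E A M -> span_in E A N -> psi (schur M N) = schur (psi M) (psi N).

Lemma psi0 : psi 0 = 0.
Proof.
have := hlin (E1 HE) (span0 A HE) (span0 A HE).
rewrite !scale1r !addr0 => h.
by apply: (addrI (psi 0)); rewrite addr0 -h.
Qed.

Lemma psi_sum (c : 'I_d.+1 -> CC) : (forall j, c j \in E) ->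
  psi (\sum_j c j *: A j) = \sum_j c j *: psi (A j).
Proof.
move=> cE.
pose K (M N : 'M[CC]_v) := span_in E A M /\ psi M = N.
suff [] : K (\sum_j c j *: A j) (\sum_j c j *: psi (A j)) by [].
apply: (big_rec2 K); first by split; [apply: span0 | apply: psi0].
move=> j M N _ [hM <-]; split; first by apply: spanZD => //; apply: spanA.
by rewrite hlin //; apply: spanA.
Qed.

Lemma sigma_ex : exists sg : 'I_d.+1 -> 'I_d.+1,
  injective sg /\ forall i, psi (A i) = A (sg i).
Proof.
have hP i : span_in E A (psi (A i)) by apply: hpsiS; apply: spanA.
pose c i k := coef rs (psi (A i)) k.
have Pi i : psi (A i) = \sum_k c i k *: A k by have [] := span_coef Ht Hrs (hP i).
have schurAA i : schur (A i) (A i) = A i.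
  by apply/matrixP=> r s; rewrite mxE Ht; case: (i == _); rewrite ?mulr1 ?mulr0.
have schurAB i j : i != j -> schur (A i) (A j) = 0.
  move=> ij; apply/matrixP=> r s; rewrite !mxE !Ht.
  case: (eqVneq i (t r s)) => [ei|]; last by rewrite mul0r.
  by move: ij; rewrite ei eq_sym => /negPf ->; rewrite mulr0.
have ci2 i k : c i k * c i k = c i k.
  have h := hschur (spanA HE Ht i) (spanA HE Ht i); rewrite schurAA in h.
  move: (congr1 (fun M : 'M[CC]_v => M (rs k).1 (rs k).2) h) => /=.
  by rewrite mxE.
have cij i j k : i != j -> c i k * c j k = 0.
  move=> ij; have h := hschur (spanA HE Ht i) (spanA HE Ht j).
  rewrite schurAB // psi0 in h.
  move: (congr1 (fun M : 'M[CC]_v => M (rs k).1 (rs k).2) h) => /=.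
  by rewrite !mxE.
have nz i : psi (A i) != 0.
  apply/eqP=> h; have : A i = 0.
    by apply: hinj; [apply: spanA | apply: span0 | rewrite psi0].
  move/(congr1 (fun M => coef rs M i)); rewrite (Aval Ht Hrs) eqxx /coef mxE.
  by move/eqP; rewrite oner_eq0.
have hex i : exists k, c i k != 0.
  case: (pickP (fun k => c i k != 0)) => [k hk|h0]; first by exists k.
  move: (nz i); rewrite Pi big1 ?eqxx // => k _.
  by move: (h0 k) => /negbFE/eqP ->; rewrite scale0r.
pose sg i := xchoose (hex i).
have sgP i : c i (sg i) != 0 := xchooseP (hex i).
have sginj : injective sg.
  move=> i j e; apply/eqP; apply: contraT => ij.
  by move: (cij i j (sg i) ij); rewrite {2}e => /eqP; rewrite mulf_eq0 (negPf (sgP i)) (negPf (sgP j)).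
have c1 i : c i (sg i) = 1.
  apply: (mulIf (sgP i)); rewrite mul1r; exact: ci2.
have c0 i k : k != sg i -> c i k = 0.
  move=> ki; pose j := invF sginj k.
  have ek : sg j = k by rewrite /j f_invF.
  have ij : i != j by apply: contraNneq ki => ->; rewrite ek.
  by move: (cij i j k ij); rewrite -ek c1 mulr1.
exists sg; split=> // i.
rewrite Pi -(sum_ind Ht); apply: eq_bigr => k _.
case: eqVneq => [->|ki]; first by rewrite c1.
by rewrite c0.
Qed.

End Psi.
Lemma sum_indF v (T : finType) (F : T -> 'M[CC]_v) k :
  \sum_l (l == k)%:R *: F l = F k.
Proof.
rewrite (bigD1 k) //= eqxx scale1r big1 ?addr0 // => l /negPf ->.
by rewrite scale0r.
Qed.

Lemma sumI (T : finType) (x : T) (F : T -> CC) : \sum_k (x == k)%:R * F k = F x.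
Proof.
rewrite (bigD1 x) //= eqxx mul1r big1 ?addr0 // => l lx.
by rewrite eq_sym (negPf lx) mul0r.
Qed.

Section Main.
Variables (v d : nat) (A : 'I_d.+1 -> 'M[CC]_v) (E : {pred CC}).
Hypothesis HE : GRing.divring_closed E.
Variable t : 'I_v -> 'I_v -> 'I_d.+1.
Hypothesis Ht : forall i r s, A i r s = (i == t r s)%:R.
Variable rs : 'I_d.+1 -> 'I_v * 'I_v.
Hypothesis Hrs : forall k, t (rs k).1 (rs k).2 = k.
Hypothesis A0 : A ord0 = 1%:M.
Hypothesis Acomm : forall i j, A i *m A j = A j *m A i.
Hypothesis Aprod : forall i j, cspan A (A i *m A j).
Variable tau : 'I_d.+1 -> 'I_d.+1.
Hypothesis HT : forall i, (A i)^T = A (tau i).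
Variable psi : 'M[CC]_v -> 'M[CC]_v.
Hypothesis hpsiS : forall M, span_in E A M -> span_in E A (psi M).
Hypothesis hlin : forall a M N, a \in E -> span_in E A M -> span_in E A N ->
     psi (a *: M + N) = a *: psi M + psi N.
Hypothesis hsurj : forall N, span_in E A N -> exists2 M, span_in E A M & psi M = N.
Hypothesis hmul : forall M N, span_in E A M -> span_in E A N -> psi (M *m N) = psi M *m psi N.
Hypothesis hctr : forall M, span_in E A M -> psi (ctrmx M) = ctrmx (psi M).
Variable sg : 'I_d.+1 -> 'I_d.+1.
Hypothesis sginj : injective sg.
Hypothesis HpsiA : forall i, psi (A i) = A (sg i).

Let spA := spanA HE Ht.
Let AinjL := Ainj Ht Hrs.

Lemma psi_comb c : (forall j, c j \in E) ->
  psi (\sum_j c j *: A j) = \sum_j c j *: A (sg j).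
Proof.
move=> cE; rewrite (psi_sum HE Ht hlin) //; apply: eq_bigr => j _.
by rewrite HpsiA.
Qed.

Lemma sg0 : sg ord0 = ord0.
Proof.
have [M hM eM] := hsurj (spA ord0).
have := hmul (spA ord0) hM; rewrite A0 mul1mx eM -A0 HpsiA A0 mulmx1 -{1}A0.
by move/AinjL.
Qed.

Lemma ctrA i : ctrmx (A i) = A (tau i).
Proof.
rewrite /ctrmx -HT; congr (_^T); apply/matrixP=> r s.
by rewrite mxE Ht; case: (i == _); rewrite ?rmorph0 ?rmorph1.
Qed.

Lemma tau_sg j : tau (sg j) = sg (tau j).
Proof.
apply: AinjL; rewrite -ctrA -HpsiA -hctr ?ctrA ?HpsiA //; exact: spA.
Qed.

Lemma tauK : involutive tau.
Proof. by move=> i; apply: AinjL; rewrite -!HT trmxK. Qed.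

Lemma iter_sg0 n : iter n sg ord0 = ord0.
Proof. by elim: n => //= n ->; rewrite sg0. Qed.

Let symsg := fconnect_sym sginj.

Lemma froot00 : froot sg ord0 = ord0.
Proof. by have := fingraph.connect_root (frel sg) ord0 => /iter_findex; rewrite iter_sg0. Qed.

Lemma froot0 j : (froot sg j == ord0) = (j == ord0).
Proof.
apply/eqP/eqP=> [h|->]; last exact: froot00.
have: fconnect sg ord0 j by rewrite symsg; apply/(fingraph.rootP symsg); rewrite h froot00.
by move/iter_findex <-; rewrite iter_sg0.
Qed.

Definition Lr := ord0 :: [seq x <- enum 'I_d.+1 | (froot sg x == x) && (x != ord0)].
Definition e := (size Lr).-1.
Lemma sizeL : size Lr = e.+1. Proof. by []. Qed.
Definition Cl (k : 'I_e.+1) := [set j | froot sg j == nth ord0 Lr k].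
Definition cls j : 'I_e.+1 := inord (index (froot sg j) Lr).

Lemma Lroot x : x \in Lr -> froot sg x = x.
Proof.
rewrite inE => /orP[/eqP ->|]; first by apply/eqP; rewrite froot0.
by rewrite mem_filter => /andP[/andP[/eqP]].
Qed.

Lemma rootL j : froot sg j \in Lr.
Proof.
rewrite inE; case: eqVneq => //= h.
by rewrite mem_filter mem_enum (fingraph.root_root symsg) eqxx h.
Qed.

Lemma uniqL : uniq Lr.
Proof.
rewrite /= filter_uniq ?enum_uniq // andbT mem_filter.
by rewrite eqxx !andbF.
Qed.

Lemma nth_cls j : nth ord0 Lr (cls j) = froot sg j.
Proof.
by rewrite /cls inordK ?nth_index ?rootL // -sizeL index_mem rootL.
Qed.

Lemma inCl j k : (j \in Cl k) = (cls j == k).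
Proof.
rewrite inE -nth_cls nth_uniq ?uniqL // sizeL ltn_ord //.
Qed.

Lemma clsE i j : (cls i == cls j) = fconnect sg i j.
Proof.
rewrite -val_eqE -(nth_uniq ord0 _ _ uniqL) ?sizeL ?ltn_ord // !nth_cls.
exact: (fingraph.root_connect symsg).
Qed.

Lemma cls_sg j : cls (sg j) = cls j.
Proof. by apply/eqP; rewrite clsE symsg fconnect1. Qed.

Lemma cls_iter i j : cls i = cls j -> exists n, j = iter n sg i.
Proof. by move/eqP; rewrite clsE => /iter_findex <-; eexists. Qed.

Lemma cls_tau1 i j : cls i = cls j -> cls (tau i) = cls (tau j).
Proof.
case/cls_iter=> n ->; apply/eqP; rewrite clsE.
have -> : tau (iter n sg i) = iter n sg (tau i).
  by elim: n => //= n <-; rewrite tau_sg.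
exact: fconnect_iter.
Qed.

Lemma cls_tau i j : (cls (tau i) == cls (tau j)) = (cls i == cls j).
Proof.
apply/eqP/eqP; last exact: cls_tau1.
by move/cls_tau1; rewrite !tauK.
Qed.

Definition rep (k : 'I_e.+1) := nth ord0 Lr k.
Lemma cls_rep k : cls (rep k) = k.
Proof.
by apply/eqP; rewrite -inCl inE Lroot // mem_nth // sizeL ltn_ord.
Qed.

Lemma fusion_sum k : fusion A Cl k = \sum_j (cls j == k)%:R *: A j.
Proof.
rewrite /fusion big_mkcond; apply: eq_bigr => j _; rewrite inCl.
by case: (_ == _); rewrite ?scale1r ?scale0r.
Qed.

Lemma fusionE k r s : fusion A Cl k r s = (cls (t r s) == k)%:R.
Proof. by rewrite fusion_sum (sumAE Ht). Qed.

Lemma comb (b : 'I_e.+1 -> CC) :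
  \sum_k b k *: fusion A Cl k = \sum_j b (cls j) *: A j.
Proof.
apply/matrixP=> r s; rewrite (sumAE Ht) summxE.
rewrite -(sumI (cls (t r s)) b); apply: eq_bigr => k _.
by rewrite mxE fusionE mulrC.
Qed.

Lemma coef_sg c j : coef rs (\sum_i c i *: A (sg i)) (sg j) = c j.
Proof.
rewrite /coef summxE (bigD1 j) //= big1 ?addr0 => [|i ij].
  by rewrite mxE Ht Hrs eqxx mulr1.
by rewrite mxE Ht Hrs (inj_eq sginj) (negPf ij) mulr0.
Qed.

Lemma fixed_iff M : (span_in E A M /\ psi M = M) <-> span_in E (fusion A Cl) M.
Proof.
split.
  case=> hM hfix; have [eM cE] := span_coef Ht Hrs hM.
  set c := coef rs M in eM cE.
  have csg j : c (sg j) = c j.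
    by have := coef_sg c j; rewrite -psi_comb // -eM hfix.
  have citer n j : c (iter n sg j) = c j.
    by elim: n => //= n <-; rewrite csg.
  exists (fun k => c (rep k)); split; first by move=> k; apply: cE.
  rewrite comb {1}eM; apply: eq_bigr => j _; congr (_ *: _).
  have [n ->] := cls_iter (esym (cls_rep (cls j))).
  by rewrite citer.
case=> b [bE ->]; rewrite comb; split.
  by exists (fun j => b (cls j)); split.
rewrite psi_comb // [RHS](reindex_inj sginj) /=; apply: eq_bigr => j _.
by rewrite cls_sg.
Qed.

Lemma Cl0 : Cl ord0 = [set ord0].
Proof. by apply/setP=> j; rewrite !inE /= froot0. Qed.

Lemma fus_span k : span_in E A (fusion A Cl k) /\ psi (fusion A Cl k) = fusion A Cl k.
Proof.
apply/fixed_iff; exists (fun l => (l == k)%:R); split; first by move=> l; apply: (Enat HE).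
by rewrite sum_indF.
Qed.

Lemma subscheme : is_subscheme A Cl.
Proof.
split.
- exact: Cl0.
- by move=> k; apply/set0Pn; exists (rep k); rewrite inCl cls_rep.
- by move=> j; exists (cls j); rewrite inCl.
- move=> k l kl; rewrite -setI_eq0; apply/eqP/setP=> j.
  rewrite in_setI !inCl in_set0; apply/negbTE; apply/andP=> [[/eqP hk /eqP hl]].
  by move/negP: kl; apply; rewrite -hk -hl.
refine (conj _ (conj _ (conj _ (conj _ (conj _ (conj _ _)))))).
- by move=> k r s; rewrite fusionE; case: (_ == _); [right|left].
- move=> k; apply/eqP=> h.
  move: (congr1 (fun M : 'M[CC]_v => M (rs (rep k)).1 (rs (rep k)).2) h).
  by rewrite /= fusionE Hrs cls_rep eqxx mxE => /eqP; rewrite oner_eq0.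
- by rewrite /fusion Cl0 big_set1 A0.
- apply/matrixP=> r s; rewrite summxE mxE.
  rewrite -[RHS](sumI (cls (t r s)) (fun=> 1)); apply: eq_bigr => k _.
  by rewrite fusionE mulr1.
- move=> k; exists (cls (tau (rep k))); apply/matrixP=> r s.
  rewrite mxE !fusionE.
  have -> : t r s = tau (t s r).
    have := HT (t s r); move/(congr1 (fun M : 'M[CC]_v => M r s)).
    rewrite mxE !Ht eqxx.
    case: eqVneq => [-> //|_ /eqP].
    by rewrite oner_eq0.
  by rewrite cls_tau cls_rep.
- move=> k l; rewrite /fusion mulmx_suml; under eq_bigr do rewrite mulmx_sumr.
  rewrite mulmx_suml exchange_big /=; apply: eq_bigr => i _.
  rewrite mulmx_sumr; apply: eq_bigr => j _; exact: Acomm.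
move=> k l; have [hk fk] := fus_span k; have [hl fl] := fus_span l.
have hkl := span_mul HE Ht Hrs Aprod hk hl.
have [|b [_ eb]] := (fixed_iff (fusion A Cl k *m fusion A Cl l)).1.
  by split=> //; rewrite hmul // fk fl.
by exists b; split.
Qed.

End Main.

Theorem lemma3p4 (v d : nat) (A : 'I_d.+1 -> 'M[CC]_v) (E : {pred CC})
    (psi : 'M[CC]_v -> 'M[CC]_v) :
  is_assoc_scheme A ->
  conj_closed_subfield E ->
  splitting_field_in A E ->
  BM_automorphism E A psi ->
  exists (e : nat) (Cl : 'I_e.+1 -> {set 'I_d.+1}),
    is_subscheme A Cl /\
    (forall M : 'M[CC]_v,
       (span_in E A M /\ psi M = M) <-> span_in E (fusion A Cl) M).
Proof.
move=> [h01 [hnz [hA0 [hsum [hT [hcomm hprod]]]]]] [HE _] _.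
move=> [hS [hlin [hinj [hsurj [hmul [hsch hctr]]]]]].
have ext r s : exists i, A i r s == 1.
  case: (pickP (fun i => A i r s == 1)) => [i hi|h0]; first by exists i.
  exfalso; move: (congr1 (fun M : 'M[CC]_v => M r s) hsum) => /=.
  rewrite summxE mxE big1 => [/eqP|i _]; first by rewrite eq_sym oner_eq0.
  by case: (h01 i r s) => // e1; move: (h0 i); rewrite e1 eqxx.
pose t r s := xchoose (ext r s).
have Ht i r s : A i r s = (i == t r s)%:R.
  have ht : A (t r s) r s = 1 := eqP (xchooseP (ext r s)).
  case: eqVneq => [->|ne] //.
  move: (congr1 (fun M : 'M[CC]_v => M r s) hsum) => /=.
  rewrite summxE mxE (bigD1 (t r s)) //= ht => /eqP.
  rewrite addrC -subr_eq0 addrK => /eqP h.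
  apply: (psumr_eq0P _ h) => // j _.
  by case: (h01 j r s) => ->; rewrite ?ler01 ?lexx.
have exrs k : exists p : 'I_v * 'I_v, t p.1 p.2 == k.
  case: (pickP (fun p : 'I_v * 'I_v => t p.1 p.2 == k)) => [p hp|h0].
    by exists p.
  exfalso; move: (hnz k) => /eqP; apply; apply/matrixP => r s.
  by rewrite mxE Ht eq_sym; move: (h0 (r, s)) => /= ->.
pose rs k := xchoose (exrs k).
have Hrs k : t (rs k).1 (rs k).2 = k := eqP (xchooseP (exrs k)).
have extau i : exists j, (A i)^T == A j.
  by case: (hT i) => j hj; exists j; apply/eqP.
pose tau i := xchoose (extau i).
have HT i : (A i)^T = A (tau i) := eqP (xchooseP (extau i)).
have [sg [sginj HpsiA]] := sigma_ex HE Ht Hrs hS hlin hinj hsch.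
exists (e sg), (Cl (sg:=sg)); split.
  exact: (subscheme HE Ht Hrs hA0 hcomm hprod HT hlin hsurj hmul hctr sginj HpsiA).
exact: (fixed_iff HE Ht Hrs hA0 hlin hsurj hmul sginj HpsiA).
Qed.
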